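(* Let $\mathscr{H}$ be a complex Hilbert space, let $T\in\mathbb{B}(\mathscr{H})$ be invertible, and let $T=U|T|$ be its polar decomposition (so $U$ is unitary). Suppose the spectrum $\mathrm{sp}(U)$ is contained in some open semicircle, i.e. $\mathrm{sp}(U)\subseteq\{e^{i\lambda}:\alpha<\lambda<\alpha+\pi\}$ for some real $\alpha$. Then the Aluthge transform $\widetilde{T}=|T|^{1/2}U|T|^{1/2}$ is normal if and only if $T$ is normal.
   Context: $\mathbb{B}(\mathscr{H})$ denotes the algebra of bounded linear operators on $\mathscr{H}$. For $T\in\mathbb{B}(\mathscr{H})$, $|T|=(T^\ast T)^{1/2}$. The polar decomposition $T=U|T|$ means $U$ is a partial isometry with $\ker U=\ker|T|$ and $U^\ast U$ the projection onto $\overline{\mathrm{ran}(|T|)}$; for invertible $T$, $U$ is unitary and $|T|$ is invertible. The Aluthge transform of $T$ is $\widetilde{T}:=|T|^{1/2}U|T|^{1/2}$. *)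

(* Defs.v *)
From mathcomp Require Import all_boot all_algebra.
From mathcomp Require Import reals trigo complex.
Import GRing.Theory Num.Theory.
Local Open Scope ring_scope.
Local Open Scope complex_scope.

Set Implicit Arguments.
Unset Strict Implicit.
Unset Printing Implicit Defensive.

Section HilbertDefs.
Variables (R : realType) (H : lmodType R[i]) (ip : H -> H -> R[i]).

Definition cnorm (x : H) : R := Num.sqrt (complex.Re (ip x x)).

Definition is_complex_hilbert : Prop :=
  [/\ (forall (a : R[i]) (x y z : H), ip (a *: x + y) z = a * ip x z + ip y z),
      (forall x y : H, ip y x = (ip x y)^*),
      (forall x : H, 0 <= ip x x),
      (forall x : H, ip x x = 0 -> x = 0) &
      (forall u : nat -> H,
         (forall e : R, 0 < e -> exists N : nat, forall m n : nat,
             (N <= m)%N -> (N <= n)%N -> cnorm (u m - u n) < e) ->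
         exists l : H, forall e : R, 0 < e -> exists N : nat, forall n : nat,
             (N <= n)%N -> cnorm (u n - l) < e)].

Definition is_bounded_op (T : H -> H) : Prop :=
  (forall (a : R[i]) (x y : H), T (a *: x + y) = a *: T x + T y) /\
  exists M : R, forall x : H, cnorm (T x) <= M * cnorm x.

Definition is_adjoint (T Ts : H -> H) : Prop :=
  forall x y : H, ip (T x) y = ip x (Ts y).

Definition op_invertible (T : H -> H) : Prop :=
  exists S : H -> H, [/\ is_bounded_op S, (forall x, S (T x) = x) &
                        (forall x, T (S x) = x)].

Definition is_positive_op (P : H -> H) : Prop :=
  is_bounded_op P /\ forall x : H, 0 <= ip (P x) x.

Definition is_unitary_op (U : H -> H) : Prop :=
  is_bounded_op U /\
  exists Us : H -> H, [/\ is_adjoint U Us, (forall x, Us (U x) = x) &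
                         (forall x, U (Us x) = x)].

Definition is_normal_op (N : H -> H) : Prop :=
  exists Ns : H -> H, is_adjoint N Ns /\ forall x, N (Ns x) = Ns (N x).

Definition spectrum (T : H -> H) (lam : R[i]) : Prop :=
  ~ op_invertible (fun x => T x - lam *: x).

Definition is_pos_sqrt (P Q : H -> H) : Prop :=
  is_positive_op Q /\ forall x, Q (Q x) = P x.

Definition is_op_abs (T A : H -> H) : Prop :=
  exists Ts : H -> H, is_adjoint T Ts /\ is_pos_sqrt (fun x => Ts (T x)) A.

(* Aluthge transform |T|^{1/2} U |T|^{1/2}, given S = |T|^{1/2} *)
Definition aluthge (S U : H -> H) : H -> H := fun x => S (U (S x)).

End HilbertDefs.

(* Main.v *)
Require Import Defs.
From mathcomp Require Import all_boot all_order all_algebra.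
From mathcomp Require Import reals trigo complex.
From mathcomp Require Import ring lra.
From mathcomp Require Import classical_sets.
From Stdlib Require Import Classical_Prop Classical_Pred_Type.
Import Order.TTheory GRing.Theory Num.Theory.
Local Open Scope ring_scope.
Local Open Scope complex_scope.
Set Implicit Arguments.
Unset Strict Implicit.

Section Cplx.
Variable R : realType.
Implicit Types x y z : R[i].

Lemma ReD x y : complex.Re (x + y) = complex.Re x + complex.Re y. Proof. by case: x => ? ?; case: y => ? ?. Qed.
Lemma ImD x y : complex.Im (x + y) = complex.Im x + complex.Im y. Proof. by case: x => ? ?; case: y => ? ?. Qed.
Lemma ReN x : complex.Re (- x) = - complex.Re x. Proof. by case: x. Qed.
Lemma ImN x : complex.Im (- x) = - complex.Im x. Proof. by case: x. Qed.
Lemma ReB x y : complex.Re (x - y) = complex.Re x - complex.Re y. Proof. by rewrite ReD ReN. Qed.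
Lemma ImB x y : complex.Im (x - y) = complex.Im x - complex.Im y. Proof. by rewrite ImD ImN. Qed.
Lemma ReM x y : complex.Re (x * y) = complex.Re x * complex.Re y - complex.Im x * complex.Im y. Proof. by case: x => ? ?; case: y => ? ?. Qed.
Lemma ImM x y : complex.Im (x * y) = complex.Re x * complex.Im y + complex.Im x * complex.Re y. Proof. by case: x => a b; case: y => c d /=. Qed.
Lemma ReJ x : complex.Re (conjc x) = complex.Re x. Proof. by case: x. Qed.
Lemma ImJ x : complex.Im (conjc x) = - complex.Im x. Proof. by case: x. Qed.
Lemma ReC (r : R) : complex.Re (r%:C) = r. Proof. by []. Qed.
Lemma ImC (r : R) : complex.Im (r%:C) = 0. Proof. by []. Qed.
Lemma Re0 : complex.Re (0 : R[i]) = 0. Proof. by []. Qed.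
Lemma Im0 : complex.Im (0 : R[i]) = 0. Proof. by []. Qed.
Lemma Re1 : complex.Re (1 : R[i]) = 1. Proof. by []. Qed.
Lemma Im1 : complex.Im (1 : R[i]) = 0. Proof. by []. Qed.
Lemma Re_cplx (a b : R) : complex.Re (a +i* b) = a. Proof. by []. Qed.
Lemma Im_cplx (a b : R) : complex.Im (a +i* b) = b. Proof. by []. Qed.
Lemma cplx_eq x y : complex.Re x = complex.Re y -> complex.Im x = complex.Im y -> x = y.
Proof. by case: x => a b; case: y => c d /= -> ->. Qed.
Lemma le0c x : (0 <= x) = (complex.Im x == 0) && (0 <= complex.Re x).
Proof. by rewrite lecE eq_sym. Qed.
End Cplx.

Section Cplx2.
Variable R : realType.
Implicit Types x y z : R[i].
Lemma conjD x y : conjc (x + y) = conjc x + conjc y.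
Proof. by apply: cplx_eq; rewrite ?ReD ?ImD ?ReJ ?ImJ ?ReD ?ImD //; ring. Qed.
Lemma conjM x y : conjc (x * y) = conjc x * conjc y.
Proof. by apply: cplx_eq; rewrite ?ReM ?ImM ?ReJ ?ImJ ?ReM ?ImM //; ring. Qed.
Lemma conjN x : conjc (- x) = - conjc x.
Proof. by apply: cplx_eq; rewrite ?ReN ?ImN ?ReJ ?ImJ ?ReN ?ImN. Qed.
Lemma conjJ x : conjc (conjc x) = x.
Proof. by apply: cplx_eq; rewrite ?ReJ ?ImJ ?opprK. Qed.
Lemma conj0 : conjc (0 : R[i]) = 0.
Proof. by apply: cplx_eq; rewrite ?ReJ ?ImJ ?oppr0. Qed.
End Cplx2.

Lemma ReMr (R : realType) (r : R) (z : R[i]) : complex.Re (r%:C * z) = r * complex.Re z.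
Proof. by rewrite ReM /= mul0r subr0. Qed.
Lemma ImMr (R : realType) (r : R) (z : R[i]) : complex.Im (r%:C * z) = r * complex.Im z.
Proof. by rewrite ImM /= mul0r addr0. Qed.
Lemma conjC (R : realType) (r : R) : conjc (r%:C) = r%:C.
Proof. by apply: cplx_eq; rewrite ?ReJ ?ImJ /= ?oppr0. Qed.

Lemma geom (R : realType) (a b p : R) : 0 <= a -> 0 <= p -> p < 1 ->
  (forall n, a <= p ^+ n * b) -> a = 0.
Proof.
move=> ha hp0 hp1 hn.
have bern n : p ^+ n * (1 + n%:R * (1 - p)) <= 1.
  elim: n => [|n IH]; first by rewrite expr0 mul0r addr0 mulr1.
  have hpn : p ^+ n.+1 <= 1 by apply: exprn_ile1 => //; lra.
  have hpn0 : 0 <= p ^+ n by apply: exprn_ge0.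
  rewrite exprS -mulrA.
  have -> : (1 + n.+1%:R * (1 - p)) = (1 + n%:R * (1 - p)) + (1 - p).
    by rewrite -addn1 natrD; ring.
  rewrite mulrDr mulrDr mulrA.
  have := ler_wpM2l hp0 IH.
  have : p * p ^+ n = p ^+ n.+1 by rewrite exprS.
  nra.
apply/eqP; rewrite eq_le ha andbT; apply/negP => /negP; rewrite -ltNge => ha0.
have hb : a <= b by have := hn 0%N; rewrite expr0 mul1r.
have hr : 0 < 1 - p by lra.
set z := b / (a * (1 - p)).
have hz : 0 <= z by apply: divr_ge0; nra.
have hN := archi_boundP hz.
set N := Num.bound z in hN.
have h1 := bern N; have h2 := hn N.
have hpN : 0 <= p ^+ N by apply: exprn_ge0.
have hza : z * (a * (1 - p)) = b.
  by rewrite /z mulfVK // mulf_neq0 // lt0r_neq0.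
have hNa : b < N%:R * (a * (1 - p)).
  by rewrite -hza ltr_pM2r // mulr_gt0.
set P := p ^+ N in h1 h2 hpN.
set m := N%:R * (1 - p) in h1.
have hm : b <= m * a by rewrite /m; lra.
have s1 := ler_wpM2l hpN hm.
have s2 : P * m <= 1 - P by lra.
have s3 := ler_wpM2r (ltW ha0) s2.
have s4 : P * a <= 0 by nra.
have s5 : P <= 0 by nra.
nra.
Qed.
Section Hil.
Variables (R : realType) (H : lmodType R[i]) (ip : H -> H -> R[i]).
Hypothesis hl : forall (a : R[i]) (x y z : H), ip (a *: x + y) z = a * ip x z + ip y z.
Hypothesis hc : forall x y : H, ip y x = conjc (ip x y).
Hypothesis hp : forall x : H, 0 <= ip x x.
Hypothesis hd : forall x : H, ip x x = 0 -> x = 0.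

Local Notation RE := complex.Re.
Local Notation IM := complex.Im.
Definition nq (x : H) := RE (ip x x).

Lemma ipDl x y z : ip (x + y) z = ip x z + ip y z.
Proof. by rewrite -[x in LHS]scale1r hl mul1r. Qed.
Lemma ip0l z : ip 0 z = 0.
Proof.
have h := ipDl 0 0 z; rewrite addr0 in h.
have: ip 0 z + ip 0 z - ip 0 z = ip 0 z - ip 0 z by rewrite -h.
by rewrite addrK subrr.
Qed.
Lemma ipZl a x z : ip (a *: x) z = a * ip x z.
Proof. by rewrite -[a *: x]addr0 hl ip0l addr0. Qed.
Lemma ipNl x z : ip (- x) z = - ip x z.
Proof. by rewrite -scaleN1r ipZl mulN1r. Qed.
Lemma ipBl x y z : ip (x - y) z = ip x z - ip y z.
Proof. by rewrite ipDl ipNl. Qed.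
Lemma ipDr x y z : ip z (x + y) = ip z x + ip z y.
Proof. by rewrite hc ipDl conjD -!hc. Qed.
Lemma ipZr a x z : ip z (a *: x) = conjc a * ip z x.
Proof. by rewrite hc ipZl conjM -hc. Qed.
Lemma ip0r z : ip z 0 = 0.
Proof. by rewrite hc ip0l conj0. Qed.
Lemma ipNr x z : ip z (- x) = - ip z x.
Proof. by rewrite hc ipNl conjN -hc. Qed.
Lemma ipBr x y z : ip z (x - y) = ip z x - ip z y.
Proof. by rewrite ipDr ipNr. Qed.

Lemma ip_im x : IM (ip x x) = 0.
Proof. by have := hp x; rewrite le0c => /andP[/eqP]. Qed.
Lemma nq_ge0 x : 0 <= nq x.
Proof. by have := hp x; rewrite le0c => /andP[_]. Qed.
Lemma ip_xx x : ip x x = (nq x)%:C.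
Proof. by apply: cplx_eq; rewrite ?ip_im. Qed.
Lemma nq0 x : nq x = 0 -> x = 0.
Proof. by move=> h; apply: hd; rewrite ip_xx h. Qed.
Lemma nq_zero : nq 0 = 0.
Proof. by rewrite /nq ip0l. Qed.
Lemma ip_ext x y : (forall z, ip z x = ip z y) -> x = y.
Proof.
move=> h; apply/eqP; rewrite -subr_eq0; apply/eqP; apply: hd.
by rewrite ipBr h subrr.
Qed.
Lemma ip_extl x y : (forall z, ip x z = ip y z) -> x = y.
Proof. by move=> h; apply: ip_ext => z; rewrite hc h -hc. Qed.

Lemma Re_ip_sym x y : RE (ip y x) = RE (ip x y).
Proof. by rewrite hc ReJ. Qed.

Lemma nqD x y : nq (x + y) = nq x + nq y + 2 * RE (ip x y).
Proof.
rewrite /nq ipDl !ipDr !ReD (Re_ip_sym x y); ring.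
Qed.
Lemma nqB x y : nq (x - y) = nq x + nq y - 2 * RE (ip x y).
Proof.
rewrite /nq ipBl !ipBr !ReB (Re_ip_sym x y); ring.
Qed.
Lemma nqN x : nq (- x) = nq x.
Proof. by rewrite /nq ipNl ipNr opprK. Qed.
Lemma nqZ a x : nq (a *: x) = (RE a ^+ 2 + IM a ^+ 2) * nq x.
Proof.
rewrite /nq ipZl ipZr !ReM !ImM ReJ ImJ ip_im; ring.
Qed.
Lemma nqZr (r : R) x : nq (r%:C *: x) = r ^+ 2 * nq x.
Proof. by rewrite nqZ /= expr0n /= addr0. Qed.

Lemma Re_ip_le x y : 2 * RE (ip x y) <= nq x + nq y.
Proof. have := nq_ge0 (x - y); rewrite nqB; lra. Qed.
Lemma Re_ip_ge x y : - (nq x + nq y) <= 2 * RE (ip x y).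
Proof. have := nq_ge0 (x + y); rewrite nqD; lra. Qed.

Lemma nqD_le x y : nq (x + y) <= 2 * (nq x + nq y).
Proof. have := Re_ip_le x y; rewrite nqD; lra. Qed.

Definition lin (F : H -> H) := forall a x y, F (a *: x + y) = a *: F x + F y.
Definition bnd (F : H -> H) := exists K : R, 0 < K /\ forall x, nq (F x) <= K * nq x.
Definition pos (P : H -> H) := lin P /\ forall x, 0 <= ip (P x) x.

Section LinF.
Variable F : H -> H.
Hypothesis hF : lin F.
Lemma linD x y : F (x + y) = F x + F y.
Proof. by rewrite -[x in LHS]scale1r hF scale1r. Qed.
Lemma lin0 : F 0 = 0.
Proof.
have h := linD 0 0; rewrite addr0 in h.
have: F 0 + F 0 - F 0 = F 0 - F 0 by rewrite -h.
by rewrite addrK subrr.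
Qed.
Lemma linZ a x : F (a *: x) = a *: F x.
Proof. by rewrite -[a *: x]addr0 hF lin0 addr0. Qed.
Lemma linN x : F (- x) = - F x.
Proof. by rewrite -scaleN1r linZ scaleN1r. Qed.
Lemma linB x y : F (x - y) = F x - F y.
Proof. by rewrite linD linN. Qed.
End LinF.

Lemma bounded_bnd F : is_bounded_op ip F -> lin F /\ bnd F.
Proof.
case=> hF [M hM]; split => //; exists (M ^+ 2 + 1); split.
  by have := sqr_ge0 M; lra.
move=> x; have := hM x; rewrite /cnorm => h.
have h1 := sqrtr_ge0 (RE (ip (F x) (F x))).
have h2 := sqrtr_ge0 (RE (ip x x)).
have e1 := sqr_sqrtr (nq_ge0 (F x)).
have e2 := sqr_sqrtr (nq_ge0 x).
have hn := nq_ge0 x.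
rewrite /nq in e1 e2 hn *.
set a := Num.sqrt _ in h h1 e1; set b := Num.sqrt _ in h h2 e2.
rewrite -e1 -e2.
have hMb : 0 <= M * b - a by lra.
have hMa : 0 <= M * b + a by lra.
have := mulr_ge0 hMb hMa; have := sqr_ge0 M; nra.
Qed.

Lemma pos_selfadj P : pos P -> forall x y, ip (P x) y = ip x (P y).
Proof.
case=> hP hpos x y.
have im0 u : IM (ip (P u) u) = 0 by have := hpos u; rewrite le0c => /andP[/eqP].
have e1 := im0 (x + y).
rewrite (linD hP) ipDl !ipDr !ImD (im0 x) (im0 y) in e1.
have e2 := im0 (x + (0 +i* 1) *: y).
rewrite (linD hP) (linZ hP) ipDl !ipDr ipZl !ipZr ipZl !ImD (im0 x) !ImM
  /= ?ReM /= ?(im0 y) in e2.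
rewrite [ip x (P y)]hc; apply: cplx_eq; rewrite ?ReJ ?ImJ; lra.
Qed.

Lemma pos_real P : pos P -> forall x, ip (P x) x = (RE (ip (P x) x))%:C.
Proof.
case=> _ hpos x; have := hpos x; rewrite le0c => /andP[/eqP h _].
by apply: cplx_eq; rewrite ?h.
Qed.
Lemma pos_ge0 P : pos P -> forall x, 0 <= RE (ip (P x) x).
Proof. by case=> _ hpos x; have := hpos x; rewrite le0c => /andP[_]. Qed.

Lemma key P L : pos P -> 0 < L -> (forall u, RE (ip (P u) u) <= L * nq u) ->
  forall x, nq (P x) <= L * RE (ip (P x) x).
Proof.
move=> hP hL hup x; have [hlP _] := hP.
set t := L^-1.
have htL : t * L = 1 by rewrite mulVf // lt0r_neq0.
have ht : 0 < t by rewrite invr_gt0.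
have h := pos_ge0 hP (x - t%:C *: P x).
rewrite (linB hlP) (linZ hlP) ipBl !ipBr !ipZl !ipZr !conjC in h.
rewrite (pos_selfadj hP (P x) x) in h.
rewrite !ReB !ReMr in h.
have hb := hup (P x).
rewrite /nq in hb *.
have hn := nq_ge0 (P x); rewrite /nq in hn.
set a := RE (ip (P x) x) in h *.
set n := RE (ip (P x) (P x)) in h hb hn *.
set b := RE (ip (P (P x)) (P x)) in h hb.
have htt : 0 <= t * t by nra.
have := ler_wpM2l htt hb.
have : 0 <= a - 2 * t * n + t * t * (L * n) by nra.
have -> : t * t * (L * n) = t * n by rewrite mulrA -(mulrA t t L) htL mulr1.
move=> h2 _.
have : L * (a - 2 * t * n + t * n) = L * a - n.
  have -> : a - 2 * t * n + t * n = a - t * n by ring.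
  by rewrite mulrBr mulrA (mulrC L t) htL mul1r.
nra.
Qed.

Lemma pos_upper P : pos P -> bnd P -> exists L, 0 < L /\ forall u, RE (ip (P u) u) <= L * nq u.
Proof.
move=> hP [K [hK hb]]; exists ((K + 1) / 2); split; first by lra.
move=> u; have h1 := Re_ip_le (P u) u; have h2 := hb u; lra.
Qed.

Lemma key' P : pos P -> bnd P -> exists L, 0 < L /\ forall x, nq (P x) <= L * RE (ip (P x) x).
Proof.
move=> hP hb; have [L [hL hu]] := pos_upper hP hb.
by exists L; split => //; apply: key.
Qed.


Definition coer (P : H -> H) := exists c : R, 0 < c /\ forall x, c * nq x <= RE (ip (P x) x).

Lemma bnd_comp F G : bnd F -> bnd G -> bnd (fun x => F (G x)).
Proof.
move=> [KF [hKF hF]] [KG [hKG hG]]; exists (KF * KG); split; first exact: mulr_gt0.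
move=> x; have := hF (G x); have := hG x; have := nq_ge0 x; have := nq_ge0 (G x); nra.
Qed.

Lemma bnd_sub F G : bnd F -> bnd G -> bnd (fun x => F x - G x).
Proof.
move=> [KF [hKF hF]] [KG [hKG hG]]; exists (2 * (KF + KG)); split; first by lra.
move=> x; have := nqD_le (F x) (- G x); rewrite nqN.
have := hF x; have := hG x; have := nq_ge0 x; nra.
Qed.

Lemma lin_sub F G : lin F -> lin G -> lin (fun x => F x - G x).
Proof.
move=> hF hG a x y; by rewrite hF hG scalerBr opprD addrACA.
Qed.

Lemma nq_eq0 x : nq x = 0 -> x = 0.
Proof. exact: nq0. Qed.

Lemma sqrt_comm B X : pos B -> bnd B -> coer B -> lin X -> bnd X ->
  (forall x, X (B (B x)) = B (B (X x))) -> forall x, X (B x) = B (X x).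
Proof.
move=> hB hbB [c [hc0 hcB]] hX hbX hXB.
have [hlB _] := hB.
set Y := fun x => X (B x) - B (X x).
have hlY : lin Y by apply: lin_sub => a x y; rewrite ?hlB ?hX //; rewrite ?hX ?hlB.
have [KY [hKY hY]] : bnd Y by apply: bnd_sub; apply: bnd_comp.
have hYB x : Y (B x) = - B (Y x).
  by rewrite /Y (linB hlB) hXB opprB.
have [M [hM hMu]] := pos_upper hB hbB.
have [c' [hc'0 hc'c hc'M]] : exists c', [/\ 0 < c', c' <= c & c' <= M / 2].
  case/orP: (le_total c (M / 2)) => h; first by exists c.
  by exists (M / 2); split => //; lra.
set q := 1 - c' / M.
have hMi : M^-1 * M = 1 by rewrite mulVf // lt0r_neq0.
have hMi0 : 0 < M^-1 by rewrite invr_gt0.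
have hcM : c' / M <= 1/2.
  by rewrite ler_pdivrMr //; lra.
have hcM0 : 0 < c' / M by apply: divr_gt0.
have hq1 : q < 1 by rewrite /q; lra.
have hq0 : 0 < q by rewrite /q; lra.
set C := fun x => x - (M^-1)%:C *: B x.
have hlC : lin C.
  move=> a x y; rewrite /C hlB scalerDr scalerA mulrC -scalerA.
  rewrite scalerBr opprD !addrA; congr (_ + _); rewrite -!addrA; congr (_ + _).
  by rewrite addrC.
have ipC x : RE (ip (C x) x) = nq x - M^-1 * RE (ip (B x) x).
  by rewrite /C ipBl ipZl ReB ReMr.
have hposC : pos C.
  split => // x; rewrite le0c; apply/andP; split.
    by rewrite /C ipBl ipZl ImB ImMr (pos_real hB) ip_im /= mulr0 subr0.
  rewrite ipC; have := hMu x; have := ler_wpM2l (ltW hMi0) (hMu x).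
  by rewrite mulrA hMi mul1r; lra.
have hCu u : RE (ip (C u) u) <= q * nq u.
  rewrite ipC /q; have := ler_wpM2l (ltW hMi0) (hcB u).
  have := ler_wpM2r (nq_ge0 u) hc'c.
  have := nq_ge0 u; have := ler_wpM2l (ltW hMi0) (ler_wpM2r (nq_ge0 u) hc'c).
  rewrite !mulrA (mulrC (M^-1) c') => h1 h2 h3 h4.
  have : c' / M * nq u <= M^-1 * RE (ip (B u) u) by lra.
  lra.
have hCb x : nq (C x) <= q ^+ 2 * nq x.
  have := key hposC hq0 hCu x; have := hCu x; have := nq_ge0 (C x); nra.
have h2Y x : Y x + Y x = C (Y x) + Y (C x).
  rewrite /C (linB hlY) (linZ hlY) hYB scalerN opprK.
  by rewrite [RHS]addrACA addNr addr0.
have hind n : forall x, nq (Y x) <= (q ^+ 2) ^+ n * KY * nq x.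
  elim: n => [|n IH] x; first by rewrite expr0 mul1r.
  have e := h2Y x.
  have e1 : nq (Y x + Y x) = 4 * nq (Y x).
    by rewrite nqD /nq (ip_xx (Y x)) /=; ring.
  have e2 := nqD_le (C (Y x)) (Y (C x)).
  rewrite -e e1 in e2.
  have i1 := hCb (Y x).
  have i2 := IH (C x).
  have i3 := IH x.
  have i4 := hCb x.
  have hqn : 0 <= (q ^+ 2) ^+ n * KY by apply: mulr_ge0; [apply: exprn_ge0; apply: sqr_ge0|lra].
  have j1 := ler_wpM2l hqn i4.
  have j2 := ler_wpM2l (sqr_ge0 q) i3.
  rewrite [(q ^+ 2) ^+ n.+1]exprS.
  move: e2 i1 i2 j1 j2; set Q := q ^+ 2; set W := Q ^+ n.
  move=> e2 i1 i2 j1 j2.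
  have eq1 : W * KY * (Q * nq x) = Q * W * KY * nq x by ring.
  have eq2 : Q * (W * KY * nq x) = Q * W * KY * nq x by ring.
  rewrite eq1 in j1; rewrite eq2 in j2.
  lra.
move=> x; apply/eqP; rewrite -subr_eq0; apply/eqP; apply: nq_eq0.
apply: (@geom _ _ (KY * nq x) (q ^+ 2)).
- exact: nq_ge0.
- exact: sqr_ge0.
- by have := mulr_gt0 hq0 hq0; rewrite expr2; nra.
- by move=> n; rewrite mulrA; apply: hind.
Qed.

Lemma bnd_add F G : bnd F -> bnd G -> bnd (fun x => F x + G x).
Proof.
move=> [KF [hKF hF]] [KG [hKG hG]]; exists (2 * (KF + KG)); split; first by lra.
move=> x; have := nqD_le (F x) (G x).
have := hF x; have := hG x; have := nq_ge0 x; nra.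
Qed.

Lemma lin_add F G : lin F -> lin G -> lin (fun x => F x + G x).
Proof. by move=> hF hG a x y; rewrite hF hG scalerDr addrACA. Qed.

Lemma normalize x : 0 < nq x -> exists y, nq y = 1 /\
  forall F, lin F -> RE (ip (F y) y) = RE (ip (F x) x) / nq x.
Proof.
move=> hx; set r := (Num.sqrt (nq x))^-1.
have hr2 : r ^+ 2 = (nq x)^-1 by rewrite /r exprVn sqr_sqrtr // ltW.
exists (r%:C *: x); split.
  by rewrite nqZr hr2 mulVf // lt0r_neq0.
move=> F hF; rewrite (linZ hF) ipZl ipZr conjC ReMr ReMr mulrA -expr2 hr2.
by rewrite mulrC.
Qed.

Lemma adj_sym V Vs : (forall x y, ip (V x) y = ip x (Vs y)) ->
  forall x y, ip (Vs x) y = ip x (V y).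
Proof. by move=> hV x y; rewrite hc -hV -hc. Qed.

Lemma adj_lin V Vs : (forall x y, ip (V x) y = ip x (Vs y)) -> lin V -> lin Vs.
Proof.
move=> hV hlV a x y; apply: ip_ext => z.
by rewrite -hV ipDr ipZr ipDr ipZr -!hV.
Qed.

Lemma unit_nq V Vs : (forall x y, ip (V x) y = ip x (Vs y)) -> (forall x, Vs (V x) = x) ->
  forall x, nq (V x) = nq x.
Proof. by move=> hV hVV x; rewrite /nq hV hVV. Qed.

Lemma inv_data F : op_invertible ip F -> exists G, [/\ bnd G, (forall x, G (F x) = x) &
  (forall x, F (G x) = x)].
Proof.
case=> G [hb h1 h2]; have [_ hbG] := bounded_bnd hb.
by exists G; split.
Qed.

Lemma quad_id V (hV : lin V) (l : R[i]) (m : R) x :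
  l + conjc l = (2 * m)%:C -> l * conjc l = 1 ->
  V (V x - conjc l *: x) - l *: (V x - conjc l *: x) = V (V x) + x - (2 * m)%:C *: V x.
Proof.
move=> h1 h2; rewrite (linB hV) (linZ hV) scalerBr scalerA h2 scale1r -h1 scalerDl.
by rewrite opprB addrACA opprD (addrC (- (conjc l *: V x))).
Qed.

Lemma bnd_id_scal (k : R) : bnd (fun x => k%:C *: x).
Proof.
exists (k ^+ 2 + 1); split; first by have := sqr_ge0 k; lra.
by move=> x; rewrite nqZr; have := nq_ge0 x; lra.
Qed.

Lemma lin_scal (k : R[i]) : lin (fun x => k *: x).
Proof. by move=> a x y; rewrite scalerDr !scalerA mulrC. Qed.

Lemma spec_coer V Vs : lin V -> (forall x y, ip (V x) y = ip x (Vs y)) ->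
  (forall x, Vs (V x) = x) -> (forall x, V (Vs x) = x) ->
  (forall l : R[i], RE l ^+ 2 + IM l ^+ 2 = 1 -> RE l <= 0 ->
     op_invertible ip (fun x => V x - l *: x)) ->
  coer V.
Proof.
move=> hlV hV hVsV hVVs hspec.
have hlVs := adj_lin hV hlV.
have hVs' := adj_sym hV.
have hnV := unit_nq hV hVsV.
have hnVs := unit_nq hVs' hVVs.
case: (classic (coer V)) => // hnot; exfalso.
pose E := fun r : R => exists x, nq x = 1 /\ r = RE (ip (V x) x).
have hE1 x : nq x = 1 -> -1 <= RE (ip (V x) x).
  by move=> h; have := Re_ip_ge (V x) x; rewrite hnV h; lra.
have hlb : has_lbound E by exists (-1) => r [x [h ->]]; exact: hE1.
have hne : nonempty E.
  have : ~ (forall x, 1 * nq x <= RE (ip (V x) x)).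
    by move=> h; apply: hnot; exists 1; split => //; lra.
  move/not_all_ex_not => [x /negP]; rewrite -ltNge mul1r => hx.
  have hx0 : 0 < nq x.
    rewrite lt_neqAle nq_ge0 andbT; apply/eqP => h0.
    by move: hx; rewrite (nq0 (esym h0)) (lin0 hlV) ip0r nq_zero /= ltxx.
  have [y [hy1 hy2]] := normalize hx0.
  by exists (RE (ip (V y) y)); exists y.
set m := inf E.
have hmlb := ge_inf hlb.
have hm x : m * nq x <= RE (ip (V x) x).
  have := nq_ge0 x; rewrite le_eqVlt => /orP[/eqP h0|hx0].
    by rewrite -h0 mulr0 (nq0 (esym h0)) (lin0 hlV) ip0r.
  have [y [hy1 hy2]] := normalize hx0.
  have : m <= RE (ip (V y) y) by apply: hmlb; exists y.
  by rewrite hy2 // ler_pdivlMr.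
have hm0 : m <= 0.
  rewrite leNgt; apply/negP => hmp; apply: hnot; exists m; split => //.
have hm1 : -1 <= m by apply: lb_le_inf => // r [x [h ->]]; exact: hE1.
set s := Num.sqrt (1 - m ^+ 2).
have hs2 : s ^+ 2 = 1 - m ^+ 2 by rewrite sqr_sqrtr //; nra.
set l := m +i* s.
have h1 : l + conjc l = (2 * m)%:C.
  by apply: cplx_eq; rewrite ?ReD ?ImD ?ReJ ?ImJ /=; ring.
have h2 : l * conjc l = 1.
  by apply: cplx_eq; rewrite ?ReM ?ImM ?ReJ ?ImJ /=; rewrite expr2 in hs2; nra.
have [G1 [[K1 [hK1 hG1]] hG1a hG1b]] : exists G, [/\ bnd G, (forall x, G (V x - l *: x) = x) &
    (forall x, V (G x) - l *: G x = x)].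
  by apply: inv_data; apply: hspec; rewrite /= ?expr2 in hs2 *; nra.
have [G2 [[K2 [hK2 hG2]] hG2a hG2b]] : exists G, [/\ bnd G,
    (forall x, G (V x - conjc l *: x) = x) & (forall x, V (G x) - conjc l *: G x = x)].
  by apply: inv_data; apply: hspec; rewrite /= ?expr2 in hs2 *; nra.
pose B := fun x => V x + Vs x - (2 * m)%:C *: x.
have hlB : lin B by apply: lin_sub; [apply: lin_add|apply: lin_scal].
have hbB : bnd B.
  apply: bnd_sub; last exact: bnd_id_scal.
  apply: bnd_add; [exists 1|exists 1]; split => // x; rewrite mul1r ?hnV ?hnVs //.
have ipB x : ip (B x) x = (2 * RE (ip (V x) x) - 2 * m * nq x)%:C.
  rewrite /B ipBl ipDl ipZl hVs' [ip x (V x)]hc.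
  apply: cplx_eq; rewrite ?ReB ?ReD ?ImB ?ImD ?ReMr ?ImMr ?ReJ ?ImJ ?ip_im /=; ring.
have hposB : pos B.
  split => // x; rewrite ipB le0c /= eqxx /=; have := hm x; lra.
have [L [hL hkey]] := key' hposB hbB.
have hVB x : V (B x) = V (V x) + x - (2 * m)%:C *: V x.
  by rewrite /B (linB hlV) (linD hlV) (linZ hlV) hVVs.
have hx x : nq x <= K2 * K1 * nq (B x).
  have e : V (B x) = V (V x - conjc l *: x) - l *: (V x - conjc l *: x).
    by rewrite (quad_id hlV x h1 h2) hVB.
  have e1 : G2 (G1 (V (B x))) = x by rewrite e hG1a hG2a.
  have := hG2 (G1 (V (B x))); rewrite e1.
  have := hG1 (V (B x)); rewrite hnV.
  have := nq_ge0 (G1 (V (B x))); nra.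
set K := K2 * K1 * L.
have hK : 0 < K by rewrite /K !mulr_gt0.
have hxx x : nq x <= K * (2 * RE (ip (V x) x) - 2 * m * nq x).
  have := hx x; have := hkey x; rewrite ipB /=.
  have := mulr_gt0 hK2 hK1; have := nq_ge0 (B x); rewrite /K; nra.
set eps := (4 * K)^-1.
have heps : 0 < eps by rewrite /eps invr_gt0; lra.
have hKe : 4 * K * eps = 1 by rewrite /eps mulfV // lt0r_neq0 //; lra.
have [e [y [hy1 ->]] he] := inf_adherent heps (conj hne hlb).
have := hxx y; rewrite hy1; nra.
Qed.

Lemma coer_of P : pos P -> bnd P -> (exists K, 0 < K /\ forall x, nq x <= K * nq (P x)) -> coer P.
Proof.
move=> hP hb [K [hK hx]]; have [L [hL hk]] := key' hP hb.
exists ((K * L)^-1); split; first by rewrite invr_gt0 mulr_gt0.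
move=> x; have h1 := hx x; have h2 := hk x.
have hKL : 0 < K * L by rewrite mulr_gt0.
rewrite ler_pdivrMl //.
have := ler_wpM2l (ltW hK) h2; rewrite mulrA; lra.
Qed.

Lemma coer_inj P : lin P -> coer P -> forall x y, P x = P y -> x = y.
Proof.
move=> hl' [c [hc0 hcP]] x y e.
have h := hcP (x - y); rewrite (linB hl') e subrr ip0l /= in h.
apply/eqP; rewrite -subr_eq0; apply/eqP; apply: nq0.
have := nq_ge0 (x - y); nra.
Qed.

Lemma dbl_inj (u v : H) : u + u = v + v -> u = v.
Proof.
have d w : w + w = (2%:R : R[i]) *: w by rewrite scalerDl scale1r.
rewrite !d => e.
have : (2%:R : R[i])^-1 *: ((2%:R : R[i]) *: u) = (2%:R : R[i])^-1 *: ((2%:R : R[i]) *: v) by rewrite e.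
rewrite !scalerA mulVf ?scale1r // pnatr_eq0 //.
Qed.


Lemma cnormZ1 (a : R[i]) x : RE a ^+ 2 + IM a ^+ 2 = 1 -> cnorm ip (a *: x) = cnorm ip x.
Proof. by move=> h; rewrite /cnorm -/(nq _) -/(nq _) nqZ h mul1r. Qed.

Lemma main_lemma T A U S :
  is_bounded_op ip T -> op_invertible ip T ->
  is_op_abs ip T A -> is_unitary_op ip U ->
  (forall x, T x = U (A x)) ->
  (exists alpha : R, forall z : R[i], spectrum ip U z ->
        exists t : R, alpha < t < alpha + pi /\ z = cos t +i* sin t) ->
  is_pos_sqrt ip A S ->
  (is_normal_op ip (aluthge S U) <-> is_normal_op ip T).
Proof.
move=> hTb hTi [Ts [_ [[hAb hApos] _]]] [hUb [Us [hU hUsU hUUs]]] hTUA [alpha hsp]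
  [[hSb hSpos] hSS].
have [hlT hbT] := bounded_bnd hTb.
have [hlA hbA] := bounded_bnd hAb.
have [hlU hbU] := bounded_bnd hUb.
have [hlS hbS] := bounded_bnd hSb.
have hpA : pos A by [].
have hpS : pos S by [].
have hlUs := adj_lin hU hlU.
have hUs' := adj_sym hU.
have hnU := unit_nq hU hUsU.
have [Ti [[Ki [hKi hTib]] hTi1 hTi2]] := inv_data hTi.
have hAc : coer A.
  apply: coer_of => //; exists Ki; split => // x.
  by have := hTib (T x); rewrite hTi1 hTUA hnU.
have hSc : coer S.
  have [KS [hKS hSbb]] := hbS.
  apply: coer_of => //; exists (Ki * KS); split; first exact: mulr_gt0.
  move=> x; have := hTib (T x); rewrite hTi1 hTUA hnU -hSS.
  have := hSbb (S x); have := nq_ge0 (S x); nra.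
have hAsurj y : A (Ti (U y)) = y.
  have e : U (A (Ti (U y))) = U y by rewrite -hTUA hTi2.
  by rewrite -(hUsU (A _)) e hUsU.
have hSinj := coer_inj hlS hSc.
have hAdjA := pos_selfadj hpA.
have hAdjS := pos_selfadj hpS.
have hTadj x y : ip (T x) y = ip x (A (Us y)) by rewrite hTUA hU hAdjA.
split.
-
  case=> N2 [hN2 hN2c].
  have eN2 y : N2 y = S (Us (S y)).
    apply: ip_ext => z; rewrite -hN2 /aluthge hAdjS hU hAdjS //.
  have hc1 w : U (A (Us w)) = Us (A (U w)).
    have := hN2c (S (Ti (U w))); rewrite !eN2 /aluthge !hSS ?hAsurj.
    by move/hSinj.
  have hc2 z : U (U (A z)) = A (U (U z)).
    by have := hc1 (U z); rewrite hUsU => ->; rewrite hUUs.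
  pose om := (- sin alpha) +i* (- cos alpha).
  have hom : RE om ^+ 2 + IM om ^+ 2 = 1.
    by rewrite /= !sqrrN addrC cos2Dsin2.
  have homc : RE (conjc om) ^+ 2 + IM (conjc om) ^+ 2 = 1.
    by rewrite ReJ ImJ /= !sqrrN addrC cos2Dsin2.
  have hoo : conjc om * om = 1.
    apply: cplx_eq; rewrite ?ReM ?ImM ?ReJ ?ImJ /=; last by ring.
    by rewrite -hom /=; ring.
  have hoo' : om * conjc om = 1 by rewrite mulrC.
  pose V := fun x => om *: U x.
  pose Vs := fun x => conjc om *: Us x.
  have hlV : lin V by move=> a x y; rewrite /V hlU scalerDr !scalerA mulrC.
  have hVadj x y : ip (V x) y = ip x (Vs y).
    by rewrite /V /Vs ipZl ipZr conjJ hU.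
  have hVsV x : Vs (V x) = x by rewrite /Vs /V (linZ hlUs) hUsU scalerA hoo scale1r.
  have hVVs x : V (Vs x) = x by rewrite /Vs /V (linZ hlU) hUUs scalerA hoo' scale1r.
  have hlVs := adj_lin hVadj hlV.
  have hnV := unit_nq hVadj hVsV.
  have hnVs := unit_nq (adj_sym hVadj) hVVs.
  have hspecV : forall l : R[i], RE l ^+ 2 + IM l ^+ 2 = 1 -> RE l <= 0 ->
      op_invertible ip (fun x => V x - l *: x).
    move=> l hl1 hl0.
    pose z := conjc om * l.
    have el : om * z = l by rewrite /z mulrA hoo' mul1r.
    have hzinv : op_invertible ip (fun x => U x - z *: x).
      apply: NNPP => hn; have [t [ht e]] := hsp z hn.
      have hRe : RE l = sin (t - alpha).
        by rewrite -el e ReM /= sinB; ring.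
      have : 0 < sin (t - alpha) by apply: sin_gt0_pi; lra.
      lra.
    case: hzinv => G [[hlG [MG hMG]] hG1 hG2].
    exists (fun y => G (conjc om *: y)); split.
    + split; first by move=> a x y; rewrite scalerDr !scalerA mulrC -scalerA hlG.
      by exists MG => x; rewrite -(cnormZ1 x homc).
    + by move=> x; rewrite scalerBr scalerA /V scalerA hoo scale1r hG1.
    + move=> y; rewrite /V -el -scalerA -scalerBr hG2 scalerA hoo' scale1r //.
  have hcV := spec_coer hlV hVadj hVsV hVVs hspecV.
  have hAVV x : A (V (V x)) = V (V (A x)).
    by rewrite /V !(linZ hlA) !(linZ hlU) (linZ hlA) hc2.
  have hAVsVs x : A (Vs (Vs x)) = Vs (Vs (A x)).
    apply: ip_ext => z.
    by rewrite -(hAdjA z) -!hVadj -hAVV hAdjA.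
  pose B := fun x => V x + Vs x.
  pose D := fun x => V x - Vs x.
  have hlB : lin B by apply: lin_add.
  have hlD : lin D by apply: lin_sub.
  have ipB x : ip (B x) x = (2 * RE (ip (V x) x))%:C.
    rewrite /B ipDl (adj_sym hVadj) [ip x (V x)]hc.
    by apply: cplx_eq; rewrite ?ReD ?ImD ?ReJ ?ImJ /=; ring.
  have [c [hc0 hcVx]] := hcV.
  have hposB : pos B.
    split => // x; rewrite ipB le0c /= eqxx /=.
    have := hcVx x; have := nq_ge0 x; nra.
  have hcB : coer B.
    exists (2 * c); split; first by lra.
    by move=> x; rewrite ipB /=; have := hcVx x; lra.
  have hbB : bnd B.
    by apply: bnd_add; [exists 1|exists 1]; split => // x; rewrite mul1r ?hnV ?hnVs.
  have hBB x : B (B x) = (V (V x) + Vs (Vs x)) + (x + x).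
    by rewrite /B (linD hlV) (linD hlVs) hVVs hVsV (addrC x (Vs _)) addrACA.
  have hABB x : A (B (B x)) = B (B (A x)).
    by rewrite !hBB !(linD hlA) hAVV hAVsVs.
  have hAB := sqrt_comm hposB hbB hcB hlA hbA hABB.
  have hBD x : B (D x) = V (V x) - Vs (Vs x).
    by rewrite /B /D (linB hlV) (linB hlVs) hVVs hVsV addrA subrK.
  have hAD x : A (D x) = D (A x).
    apply: (coer_inj hlB hcB).
    by rewrite -hAB hBD (linB hlA) hAVV hAVsVs -hBD.
  have hAV x : A (V x) = V (A x).
    apply: dbl_inj.
    have e w : V w + V w = B w + D w by rewrite /B /D addrACA subrr addr0.
    by rewrite -(linD hlA) e (linD hlA) hAB hAD -e.
  have hAU x : A (U x) = U (A x).
    have := hAV x; rewrite /V (linZ hlA) => e.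
    by rewrite -[A (U x)]scale1r -hoo -scalerA e scalerA hoo scale1r.
  exists (fun y => A (Us y)); split => // x.
  by rewrite !hTUA hUsU -(hAU (A (Us x))) -(hAU (Us x)) hUUs.
- case=> N [hN hNc].
  have eN y : N y = A (Us y) by apply: ip_ext => z; rewrite -hN hTadj.
  have hUAA z : U (A (A z)) = A (A (U z)).
    by have := hNc (U z); rewrite !eN hUsU !hTUA hUsU => <-.
  have hUA := sqrt_comm hpA hbA hAc hlU hbU hUAA.
  have hUSS z : U (S (S z)) = S (S (U z)) by rewrite !hSS hUA.
  have hUS := sqrt_comm hpS hbS hSc hlU hbU hUSS.
  have hal x : aluthge S U x = T x by rewrite /aluthge hUS hSS hTUA hUA.
  exists N; split => [x y|x]; first by rewrite hal hN.
  by rewrite !hal hNc.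
Qed.
End Hil.

Theorem theorem2p5 (R : realType) (H : lmodType R[i]) (ip : H -> H -> R[i]) :
  is_complex_hilbert ip ->
  forall T : H -> H, is_bounded_op ip T -> op_invertible ip T ->
  forall A U S : H -> H,
    is_op_abs ip T A ->
    is_unitary_op ip U ->
    (forall x, T x = U (A x)) ->
    (exists alpha : R, forall z : R[i], spectrum ip U z ->
        exists t : R, alpha < t < alpha + pi /\ z = cos t +i* sin t) ->
    is_pos_sqrt ip A S ->
    (is_normal_op ip (aluthge S U) <-> is_normal_op ip T).
Proof.
case=> hl hc hp hd _ T hTb hTi A U S hA hU hTUA hsp hS.
exact: (main_lemma hl hc hp hd hTb hTi hA hU hTUA hsp hS).
Qed.
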